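(* Let $E$ be a finite geometric commutative monoid of idempotents with set of atoms $A$. Then $E$ has a monoid presentation with generators $a\in A$ and relations: $a^2=a$ for $a\in A$; $ab=ba$ for $a,b\in A$; and, for every minimally dependent set $\{a_1,\dots,a_k\}$ of atoms, $\widehat{a}_1a_2\cdots a_k=a_1\widehat{a}_2a_3\cdots a_k=\cdots=a_1\cdots a_{k-1}\widehat{a}_k$, where $\widehat{a}_i$ means that $a_i$ is omitted.
   Context: A finite commutative monoid of idempotents $E$ is a join-semilattice with least element $\mathbf 0$ (the identity) via $x\le y\iff xy=y$, with $xy=x\vee y$. It is graded if all saturated chains from $\mathbf 0$ to any $x$ have the same length $\mathrm{rk}(x)$; atoms are the elements of rank $1$; it is atomic if every element is a join of atoms. $E$ is geometric if it is a graded atomic lattice with $\mathrm{rk}(a\vee b)+\mathrm{rk}(a\wedge b)\le\mathrm{rk}(a)+\mathrm{rk}(b)$ for all $a,b$. A set $S$ of atoms is independent if $\bigvee(S\setminus\{s\})<\bigvee S$ for all $s\in S$, dependent otherwise, and minimally dependent if dependent with every proper subset independent. *)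

(* Defs.v *)
From mathcomp Require Import all_boot.
Set Implicit Arguments. Unset Strict Implicit. Unset Printing Implicit Defensive.

Section CMI.
Variables (T : finType) (mul : T -> T -> T) (one : T).

Definition is_cmi : Prop :=
  [/\ forall x y z, mul x (mul y z) = mul (mul x y) z,
      forall x y, mul x y = mul y x,
      forall x, mul x x = x &
      forall x, mul one x = x /\ mul x one = x].

(* x <= y iff xy = y ; join is the product *)
Definition le (x y : T) : bool := mul x y == y.
Definition lt (x y : T) : bool := le x y && (x != y).
Definition cov (x y : T) : bool := lt x y && ~~ [exists z, lt x z && lt z y].

(* s is a saturated chain 0 = one < s_1 < ... < s_n = x of length n = size s *)
Definition sat_chain (x : T) (s : seq T) : bool := path cov one s && (last one s == x).

Definition graded : Prop :=
  forall x s1 s2, sat_chain x s1 -> sat_chain x s2 -> size s1 = size s2.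

Definition has_rank (x : T) (n : nat) : Prop := exists2 s, sat_chain x s & size s = n.

Definition is_atom (a : T) : bool := cov one a.

Definition join_seq (s : seq T) : T := foldr mul one s.
Definition join_set (S : {set T}) : T := join_seq (enum S).

Definition atomic : Prop :=
  forall x, exists2 s : seq T, all is_atom s & x = join_seq s.

Definition is_meet (a b m : T) : Prop :=
  [/\ le m a, le m b & forall z, le z a -> le z b -> le z m].

Definition is_lattice : Prop := forall a b, exists m, is_meet a b m.

Definition geometric : Prop :=
  [/\ graded, atomic, is_lattice &
      forall a b m ra rb rj rm, is_meet a b m ->
        has_rank a ra -> has_rank b rb -> has_rank (mul a b) rj -> has_rank m rm ->
        rj + rm <= ra + rb].

Definition independent (S : {set T}) : Prop :=
  forall s, s \in S -> lt (join_set (S :\ s)) (join_set S).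
Definition dependent (S : {set T}) : Prop := ~ independent S.
Definition min_dependent (S : {set T}) : Prop :=
  dependent S /\ forall S' : {set T}, S' \proper S -> independent S'.

Definition gen := {a : T | is_atom a}.
Definition eval (w : seq gen) : T := join_seq (map val w).

Definition omit (i : nat) (w : seq gen) : seq gen := take i w ++ drop i.+1 w.

Inductive rels : seq gen -> seq gen -> Prop :=
| rel_idem (a : gen) : rels [:: a; a] [:: a]
| rel_comm (a b : gen) : rels [:: a; b] [:: b; a]
| rel_dep (w : seq gen) (i j : nat) :
    uniq w -> min_dependent [set x in map val w] ->
    i < size w -> j < size w -> rels (omit i w) (omit j w).

Inductive cong (R : seq gen -> seq gen -> Prop) : seq gen -> seq gen -> Prop :=
| cong_base u v : R u v -> cong R u v
| cong_refl u : cong R u u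
| cong_sym u v : cong R u v -> cong R v u
| cong_trans u v w : cong R u v -> cong R v w -> cong R u w
| cong_ctx p q u v : cong R u v -> cong R (p ++ u ++ q) (p ++ v ++ q).

(* E is presented by generators A and relations rels: the evaluation morphism
   from the free monoid on A is onto and its kernel is the congruence generated
   by rels *)
Definition presented_by_atoms : Prop :=
  (forall x : T, exists w : seq gen, eval w = x) /\
  (forall u v : seq gen, eval u = eval v <-> cong rels u v).

End CMI.

(* Main.v *)
Require Import Defs.
From mathcomp Require Import all_boot.
From Stdlib Require Import Classical.
Set Implicit Arguments. Unset Strict Implicit. Unset Printing Implicit Defensive.

Section Alg.
Context (T : finType) (mul : T -> T -> T) (one : T) (H : is_cmi mul one).

Let mA : forall x y z, mul x (mul y z) = mul (mul x y) z. Proof. by case: H. Qed.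
Let mC : forall x y, mul x y = mul y x. Proof. by case: H. Qed.
Let mI : forall x, mul x x = x. Proof. by case: H. Qed.
Let m1 : forall x, mul one x = x. Proof. by case: H => _ _ _ h x; case: (h x). Qed.
Let m1r : forall x, mul x one = x. Proof. by case: H => _ _ _ h x; case: (h x). Qed.

Notation le := (le mul). Notation lt := (lt mul). Notation cov := (cov mul).
Notation J := (join_seq mul one). Notation JS := (join_set mul one).

Lemma le_refl x : le x x. Proof. by rewrite /Defs.le mI. Qed.
Lemma le_antisym x y : le x y -> le y x -> x = y.
Proof. by rewrite /Defs.le => /eqP h1 /eqP h2; rewrite -h1 -{1}h2 mC. Qed.
Lemma le_trans x y z : le x y -> le y z -> le x z.
Proof. by rewrite /Defs.le => /eqP h1 /eqP h2; rewrite -h2 mA h1. Qed.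
Lemma le_mulE x y z : le (mul x y) z = le x z && le y z.
Proof.
rewrite /Defs.le; apply/eqP/andP.
  move=> h; split; apply/eqP.
    by rewrite -{1}h mA mA mI h.
  by rewrite -{1}h (mC x y) mA mA mI (mC y x) h.
by case=> /eqP h1 /eqP h2; rewrite -mA h2 h1.
Qed.
Lemma le1 x : le one x. Proof. by rewrite /Defs.le m1. Qed.
Lemma le_mull x y : le x (mul x y). Proof. by rewrite /Defs.le mA mI. Qed.
Lemma le_mulr x y : le y (mul x y). Proof. by rewrite mC le_mull. Qed.
Lemma leJ s z : le (J s) z = all (fun x => le x z) s.
Proof. by elim: s => [|x s IH] /=; rewrite ?le1 // le_mulE IH. Qed.
Lemma J_eq s1 s2 : s1 =i s2 -> J s1 = J s2.
Proof.
move=> e; apply: le_antisym; rewrite leJ; apply/allP => x.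
  by rewrite e => hx; have := le_refl (J s2); rewrite leJ => /allP; apply.
by rewrite -e => hx; have := le_refl (J s1); rewrite leJ => /allP; apply.
Qed.
Lemma J_cat s1 s2 : J (s1 ++ s2) = mul (J s1) (J s2).
Proof. by elim: s1 => [|x s IH] /=; rewrite ?m1 // IH mA. Qed.
Lemma leJS (S : {set T}) z : le (JS S) z = [forall x in S, le x z].
Proof.
rewrite /join_set leJ; apply/allP/forall_inP => h x hx; apply: h => //.
  by rewrite mem_enum. by rewrite -(mem_enum S).
Qed.
Lemma le_JS (S : {set T}) x : x \in S -> le x (JS S).
Proof. by move=> hx; have := le_refl (JS S); rewrite leJS => /forall_inP; apply. Qed.
Lemma JS_mono (S S' : {set T}) : S \subset S' -> le (JS S) (JS S').
Proof. by move=> /subsetP h; rewrite leJS; apply/forall_inP => x /h; apply: le_JS. Qed.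
Lemma lt_trans x y z : lt x y -> lt y z -> lt x z.
Proof.
rewrite /Defs.lt => /andP[h1 n1] /andP[h2 n2].
rewrite (le_trans h1 h2) /=; apply/eqP => e; subst z.
by move/eqP: n1; apply; apply: le_antisym.
Qed.
Lemma lt_le x y : lt x y -> le x y. Proof. by case/andP. Qed.
Lemma chain_ex_n n x y : #|[set z | lt x z && le z y]| <= n -> le x y ->
  exists s, path cov x s && (last x s == y).
Proof.
elim: n x y => [|n IH] x y hc hle.
  case: (x =P y) => [->|ne]; first by exists nil; rewrite /= eqxx.
  have : y \in [set z | lt x z && le z y] by rewrite inE /Defs.lt hle le_refl andbT; apply/eqP.
  by move: hc; rewrite leqn0 => /eqP/card0_eq ->.
case: (x =P y) => [->|ne]; first by exists nil; rewrite /= eqxx.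
have lxy : lt x y by rewrite /Defs.lt hle; apply/eqP.
case cxy: (cov x y); first by exists [:: y]; rewrite /= cxy eqxx.
move: cxy; rewrite /Defs.cov lxy /= negbK => /existsP[z /andP[lxz lzy]].
have [s1 /andP[p1 l1]] : exists s, path cov x s && (last x s == z).
  apply: (IH) (lt_le lxz); rewrite -ltnS; apply: leq_trans hc.
  apply: proper_card; apply/properP; split.
    by apply/subsetP => u; rewrite !inE => /andP[-> h]; rewrite (le_trans h (lt_le lzy)).
  exists y; first by rewrite inE lxy le_refl.
  by rewrite inE; apply/negP => /andP[_ h]; case/andP: lzy => h2 /eqP; apply; apply: le_antisym.
have [s2 /andP[p2 l2]] : exists s, path cov z s && (last z s == y).
  apply: (IH) (lt_le lzy); rewrite -ltnS; apply: leq_trans hc.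
  apply: proper_card; apply/properP; split.
    by apply/subsetP => u; rewrite !inE => /andP[h ->]; rewrite (lt_trans lxz h).
  exists z; first by rewrite inE lxz (lt_le lzy).
  by rewrite inE /Defs.lt eqxx andbF.
exists (s1 ++ s2); rewrite cat_path p1 /= last_cat; move/eqP: l1 => ->; by rewrite p2.
Qed.
Lemma chain_ex x y : le x y -> exists s, path cov x s && (last x s == y).
Proof. exact: chain_ex_n (leqnn _). Qed.

Lemma cover_atom (G : geometric mul one) x t : is_atom mul one t -> ~~ le t x -> cov x (mul x t).
Proof.
move=> hat ntx; case: G => _ _ Hlat Hineq.
have lxt : lt x (mul x t).
  rewrite /Defs.lt le_mull; apply/eqP => e; move/negP: ntx; apply.
  by rewrite /Defs.le mC -e.
rewrite /Defs.cov lxt /=; apply/existsP => -[z /andP[lxz lzy]].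
have [s0 /andP[p0 l0]] := chain_ex (le1 x).
have [s1 /andP[p1 l1]] := chain_ex (lt_le lxz).
have [s2 /andP[p2 l2]] := chain_ex (lt_le lzy).
have ns1 : 0 < size s1.
  case: s1 p1 l1 => //= _ /eqP e; move: lxz; rewrite /Defs.lt e eqxx andbF //.
have ns2 : 0 < size s2.
  case: s2 p2 l2 => //= _ /eqP e; move: lzy; rewrite /Defs.lt e eqxx andbF //.
have [m hm] := Hlat x t.
have m1e : m = one.
  case: hm => hmx hmt _.
  case: (m =P one) => // nm; exfalso.
  case: (m =P t) => [emt|nmt].
    by subst m; move/negP: ntx; apply.
  move: hat; rewrite /is_atom /Defs.cov => /andP[_ /existsP]; apply; exists m.
  by rewrite /Defs.lt le1 hmt; apply/andP; split; apply/eqP => e; [apply: nm|apply: nmt].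
subst m.
have := Hineq x t one (size s0) 1 (size (s0 ++ s1 ++ s2)) 0 hm.
have -> : size (s0 ++ s1 ++ s2) + 0 <= size s0 + 1 = false.
  apply/negbTE; rewrite -ltnNge !size_cat addn0 ltn_add2l.
  exact: (leq_add ns1 ns2).
move=> h; suff : false by []; apply: h.
- by exists s0 => //; apply/andP; split.
- by exists [:: t] => //; rewrite /sat_chain /= andbT eqxx andbT; exact: hat.
- exists (s0 ++ s1 ++ s2) => //; apply/andP; split.
    rewrite cat_path p0 /= (eqP l0) cat_path p1 /= (eqP l1) p2 //.
  by rewrite !last_cat (eqP l0) (eqP l1).
- by exists nil => //; rewrite /sat_chain /= eqxx.
Qed.

Lemma exchange (G : geometric mul one) x t m : is_atom mul one t -> ~~ le t x ->
  le m (mul x t) -> ~~ le m x -> le t (mul x m).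
Proof.
move=> hat ntx hm nmx; have cv := cover_atom G hat ntx.
have hy : le (mul x m) (mul x t) by rewrite le_mulE le_mull hm.
have lxy : lt x (mul x m).
  rewrite /Defs.lt le_mull; apply/eqP => e; move/negP: nmx; apply.
  by rewrite /Defs.le mC -e.
case: (mul x m =P mul x t) => [->|ne]; first by apply: le_mulr.
move: cv; rewrite /Defs.cov => /andP[_ /existsP]; case; exists (mul x m).
by rewrite lxy /Defs.lt hy; apply/eqP.
Qed.
Lemma lt_not_le a b : lt a b -> ~~ le b a.
Proof. by case/andP => h1 n; apply/negP => h2; move/eqP: n; apply; apply: le_antisym. Qed.

Lemma indep_elem (S : {set T}) m : m \in S -> lt (JS (S :\ m)) (JS S) -> ~~ le m (JS (S :\ m)).
Proof.
move=> hm hlt; apply/negP => h; move/negP: (lt_not_le hlt); apply.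
rewrite leJS; apply/forall_inP => u hu; case: (u =P m) => [->//|nu].
by apply: le_JS; rewrite !inE; apply/andP; split => //; apply/eqP.
Qed.

Lemma indepP (S : {set T}) : independent mul one S <-> [forall s in S, lt (JS (S :\ s)) (JS S)].
Proof. by split => [h|/forall_inP h]; [apply/forall_inP|]. Qed.

Lemma circuit (G : geometric mul one) (M : {set T}) : {subset M <= is_atom mul one} ->
  min_dependent mul one M -> forall t, t \in M -> JS (M :\ t) = JS M.
Proof.
move=> hat [dep isub].
have [m hm nlt] : exists2 m, m \in M & ~~ lt (JS (M :\ m)) (JS M).
  apply: NNPP => hne; apply: dep => s hs; apply/negPn/negP => h; apply: hne; by exists s.
have JmM : JS (M :\ m) = JS M.
  by move: nlt; rewrite /Defs.lt (JS_mono (subD1set M m)) /= negbK => /eqP.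
move=> t ht; case: (t =P m) => [->//|ntm].
have imt : independent mul one (M :\ t) by apply: isub; apply: properD1.
have imm : independent mul one (M :\ m) by apply: isub; apply: properD1.
have mMt : m \in M :\ t by rewrite !inE hm andbT; apply/eqP => e; apply: ntm.
have tMm : t \in M :\ m by rewrite !inE ht andbT; apply/eqP.
set Y := M :\ t :\ m.
have eY : M :\ m :\ t = Y by apply/setP => u; rewrite !inE andbCA.
have nmx : ~~ le m (JS Y) by apply: indep_elem => //; apply: imt.
have ntx : ~~ le t (JS Y) by rewrite -eY; apply: indep_elem => //; apply: imm.
have hmY : le m (mul (JS Y) t).
  apply: le_trans (le_JS hm) _; rewrite -JmM leJS; apply/forall_inP => u hu.
  case: (u =P t) => [->|nut]; first by apply: le_mulr.
  apply: le_trans (le_mull _ t); apply: le_JS; rewrite -eY in_setD1 hu andbT; by apply/eqP.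
have ex := exchange G (hat t ht) ntx hmY nmx.
have hxm : le (mul (JS Y) m) (JS (M :\ t)).
  by rewrite le_mulE (le_JS mMt) andbT; apply: JS_mono; apply: subD1set.
apply: le_antisym; first by apply: JS_mono; apply: subD1set.
rewrite leJS; apply/forall_inP => u hu; case: (u =P t) => [->|nut].
  exact: le_trans ex hxm.
by apply: le_JS; rewrite !inE hu andbT; apply/eqP.
Qed.
Definition omitg (X : Type) i (w : seq X) := take i w ++ drop i.+1 w.
Lemma omitE i (w : seq (gen mul one)) : omit i w = omitg i w. Proof. by []. Qed.

Lemma mem_omit (X : eqType) (x0 : X) (w : seq X) i x : uniq w -> i < size w ->
  (x \in omitg i w) = (x \in w) && (x != nth x0 w i).
Proof.
move=> U hi.
have e : w = take i w ++ nth x0 w i :: drop i.+1 w by rewrite -drop_nth // cat_take_drop.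
move: U; rewrite {1}e cat_uniq /= => /and3P[_ nh /andP[nd _]].
rewrite /omitg {3}e !mem_cat in_cons.
case: (x =P nth x0 w i) => [->|nx] /=; last by rewrite andbT.
rewrite (negbTE nd) orbF andbF; apply/negbTE; apply: contra nh => h.
by rewrite /= h.
Qed.

Lemma map_omit (X Y : Type) (f : X -> Y) i w : map f (omitg i w) = omitg i (map f w).
Proof. by rewrite /omitg map_cat map_take map_drop. Qed.

Lemma eval_omit (x0 : gen mul one) (w : seq (gen mul one)) i : uniq w -> i < size w ->
  eval (omit i w) = JS ([set x in map val w] :\ val (nth x0 w i)).
Proof.
move=> U hi; rewrite /eval /join_set omitE map_omit; apply: J_eq => x.
rewrite (mem_omit (val x0)) ?(map_inj_uniq val_inj) ?size_map // mem_enum !inE (nth_map x0) //.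
by rewrite andbC.
Qed.

Lemma cong_eval (G : geometric mul one) u v : cong (@rels _ mul one) u v -> eval u = eval v.
Proof.
elim => {u v}.
- move=> u v []; first by move=> a; rewrite /eval /= !m1r mI.
    by move=> a b; rewrite /eval /= !m1r mC.
  move=> w i j U md hi hj.
  have x0 : gen mul one by case: w U md hi hj => // a.
  have hat : {subset [set x in map val w] <= is_atom mul one}.
    by move=> x; rewrite inE => /mapP[y _ ->]; apply: valP.
  have hin k : k < size w -> val (nth x0 w k) \in [set x in map val w].
    by move=> hk; rewrite inE; apply: map_f; apply: mem_nth.
  by rewrite (eval_omit x0 U hi) (eval_omit x0 U hj) !(circuit G hat md) ?hin.
- by [].
- by move=> u v _ ->.
- by move=> u v w _ -> _ ->.
- by move=> p q u v _ e; rewrite /eval !map_cat !J_cat -!/(eval _) e.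
Qed.
Notation congR := (cong (@rels _ mul one)).
Notation gT := (gen mul one).

Lemma cong_cons (a : gT) u v : congR u v -> congR (a :: u) (a :: v).
Proof. by move=> h; have := cong_ctx [:: a] [::] h; rewrite /= !cats0. Qed.
Lemma cong_catr (q : seq gT) u v : congR u v -> congR (u ++ q) (v ++ q).
Proof. by move=> h; have := cong_ctx [::] q h. Qed.
Lemma cong_swap (a b : gT) s : congR (a :: b :: s) (b :: a :: s).
Proof. exact: (cong_catr s (cong_base (rel_comm a b))). Qed.
Lemma cong_dup (a : gT) s : congR (a :: a :: s) (a :: s).
Proof. exact: (cong_catr s (cong_base (rel_idem a))). Qed.

Lemma cong_ins (a : gT) (P : pred gT) s : uniq s -> a \in s ->
  congR (a :: filter P s) (filter (predU1 a P) s).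
Proof.
elim: s => [|b s IH] //= /andP[nb U]; rewrite in_cons.
case: (a =P b) => [e _|nab] /=.
  subst b.
  rewrite eqxx /=.
  have -> : filter (predU1 a P) s = filter P s.
    apply: eq_in_filter => x hx /=; case: (x =P a) => // e; subst x.
    by move: nb; rewrite hx.
  case: (P a) => //; first exact: cong_dup.
  exact: cong_refl.
move=> has; have IHs := IH U has.
have -> : (b == a) = false by apply/eqP => e; apply: nab.
rewrite /=; case: (P b).
  apply: cong_trans (cong_swap _ _ _) _; exact: cong_cons.
exact: IHs.
Qed.

Lemma cong_norm (w : seq gT) : congR w (filter (mem w) (enum [set: gT])).
Proof.
elim: w => [|a w IH].
  by rewrite (eq_filter (a2 := pred0)) // filter_pred0; exact: cong_refl.
apply: cong_trans (cong_cons a IH) _.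
have -> : filter (mem (a :: w)) (enum [set: gT]) = filter (predU1 a (mem w)) (enum [set: gT]).
  by apply: eq_filter => x; apply: in_cons.
by apply: cong_ins; rewrite ?enum_uniq ?mem_enum ?in_setT.
Qed.

Lemma cong_mem (u v : seq gT) : u =i v -> congR u v.
Proof.
move=> e; apply: cong_trans (cong_norm u) _; apply: cong_sym.
have -> : filter (mem u) (enum [set: gT]) = filter (mem v) (enum [set: gT]).
  by apply: eq_filter => x; exact: e.
exact: cong_norm.
Qed.
Lemma key (w : seq gT) (a : gT) : le (val a) (eval w) -> congR w (a :: w).
Proof.
move=> haw; case: (boolP (a \in w)) => aw.
  by apply: cong_mem => x; rewrite in_cons; case: (x =P a) => // ->; rewrite aw.
set W := [set x | x \in map val w].
set A := val a.
have AW : A \notin W by rewrite inE (mem_map val_inj).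
have JW : JS W = eval w by apply: J_eq => x; rewrite mem_enum inE.
pose P := [pred C : {set T} | (C \subset W) && le A (JS C)].
have PW : P W by rewrite /= subxx JW.
have [C minC _] := minset_exists PW.
have /andP[hCW hAC] := minsetp minC.
have hsub : forall B : {set T}, B \subset C -> [forall s in B, lt (JS (B :\ s)) (JS B)].
  move=> B hBC; apply/forall_inP => s hs; apply/negPn/negP => hnlt.
  have eB : JS (B :\ s) = JS B.
    by move: hnlt; rewrite /Defs.lt (JS_mono (subD1set B s)) /= negbK => /eqP.
  have sC : s \in C by move/subsetP: hBC; apply.
  have PC : P (C :\ s).
    rewrite /= (subset_trans (subD1set C s) hCW) /=; apply: le_trans hAC _.
    rewrite leJS; apply/forall_inP => u hu; case: (u =P s) => [->|nus].
      apply: le_trans (le_JS hs) _; rewrite -eB; apply: JS_mono; exact: setSD.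
    by apply: le_JS; rewrite !inE hu andbT; apply/eqP.
  have := minsetinf minC PC (subD1set C s).
  by move/setP/(_ s); rewrite !inE eqxx sC.
have AC : A \notin C by apply: contra AW; move/subsetP: hCW; apply.
set D := A |: C.
pose Q := [pred M : {set T} | (M \subset D) && ~~ [forall s in M, lt (JS (M :\ s)) (JS M)]].
have QD : Q D.
  rewrite /= subxx /=; apply/forall_inP => h.
  have hA : A \in D by rewrite !inE eqxx.
  have := lt_not_le (h A hA); rewrite /D setU1K //; apply/negP/negPn.
  rewrite leJS; apply/forall_inP => u; rewrite !inE => /orP[/eqP ->//|hu].
  exact: le_JS.
have [M minM _] := minset_exists QD.
have /andP[hMD hMdep] := minsetp minM.
have AM : A \in M.
  apply/negPn/negP => nAM; move/negP: hMdep; apply; apply: hsub.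
  apply/subsetP => u hu; move/subsetP: hMD => /(_ u hu); rewrite !inE => /orP[/eqP e|//].
  by subst u; rewrite hu in nAM.
have md : min_dependent mul one M.
  split; first by move/indepP => h; move/negP: hMdep; apply.
  move=> S' pS; apply/indepP; apply/negPn/negP => hd.
  have QS : Q S' by rewrite /= hd andbT (subset_trans (proper_sub pS) hMD).
  by move: (proper_neq pS); rewrite (minsetinf minM QS (proper_sub pS)) eqxx.
have [m hm nmA] : exists2 m, m \in M & m != A.
  case: (boolP [exists m in M, m != A]) => [/exists_inP[m ? ?]|hno]; first by exists m.
  exfalso; have eM : M = [set A].
    apply/setP => u; rewrite inE; apply/idP/eqP => [hu|->//].
    by apply/eqP; apply: contraR hno => nu; apply/exists_inP; exists u.
  move/negP: hMdep; apply; rewrite eM; apply/forall_inP => s; rewrite inE => /eqP ->.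
  rewrite setDv /join_set enum_set0 enum_set1 /= m1r; exact: (andP (valP a)).1.
have inW : forall u, u \in M -> u != A -> u \in W.
  move=> u hu nu; move/subsetP: hMD => /(_ u hu); rewrite !inE (negbTE nu) /=.
  by move/subsetP: hCW => h /h; rewrite inE.
have atM : forall u, u \in M -> is_atom mul one u.
  move=> u hu; case: (u =P A) => [->|nu]; first exact: valP.
  by move: (inW u hu (introN eqP nu)); rewrite inE => /mapP[y _ ->]; apply: valP.
pose w' := [seq x <- enum [set: gT] | val x \in M].
have Uw : uniq w' by rewrite filter_uniq // enum_uniq.
have memw x : (x \in w') = (val x \in M) by rewrite mem_filter mem_enum in_setT andbT.
pose m' : gT := Sub m (atM m hm).
have aw' : a \in w' by rewrite memw.
have mw' : m' \in w' by rewrite memw SubK.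
have am' : a != m'.
  apply/eqP => e; move/eqP: nmA; apply; have : val m' = m by rewrite SubK.
  by rewrite -e.
have setw : [set x in map val w'] = M.
  apply/setP => u; rewrite inE; apply/mapP/idP => [[y hy ->]|hu]; first by rewrite -memw.
  by exists (Sub u (atM u hu)); rewrite ?memw SubK.
have hi : index a w' < size w' by rewrite index_mem.
have hj : index m' w' < size w' by rewrite index_mem.
have md' : min_dependent mul one [set x in map val w'] by rewrite setw.
have R := cong_base (rel_dep Uw md' hi hj).
have hMw : forall x : gT, val x \in M -> x != a -> x \in w.
  move=> x hx nx; have := inW _ hx; rewrite inE (mem_map val_inj); apply.
  by apply: contra nx => /eqP/val_inj ->.
apply: cong_trans (_ : congR w (omit (index a w') w' ++ w)) _.
  apply: cong_mem => x; rewrite mem_cat omitE (mem_omit a) // nth_index //.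
  by case: (boolP (x \in w)); rewrite ?orbT // orbF memw => nx; apply/esym/negbTE/negP => /andP[h1 h2]; move/negP: nx; apply; apply: hMw.
apply: cong_trans (cong_catr w R) _.
apply: cong_mem => x; rewrite mem_cat omitE (mem_omit a) // nth_index // in_cons.
case: (x =P a) => [->|nxa] /=; first by rewrite aw' am'.
by case: (boolP (x \in w)); rewrite ?orbT // orbF memw => nx; apply/negbTE/negP => /andP[h1 h2]; move/negP: nx; apply; apply: hMw => //; apply/eqP.
Qed.
Lemma step (u v : seq gT) : (forall y, y \in v -> le (val y) (eval u)) -> congR u (v ++ u).
Proof.
elim: v => [|a v IH] h /=; first exact: cong_refl.
have IHv := IH (fun y hy => h y (mem_behead (s := a :: v) hy)).
apply: cong_trans IHv _; apply: key.
have e : eval (v ++ u) = eval u.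
  rewrite /eval map_cat J_cat; apply/eqP; rewrite -/(eval v) -/(eval u).
  change (le (eval v) (eval u)); rewrite /eval leJ; apply/allP => x /mapP[y hy ->].
  by apply: h; rewrite in_cons hy orbT.
by rewrite e; apply: h; rewrite in_cons eqxx.
Qed.

Lemma main (G : geometric mul one) : presented_by_atoms mul one.
Proof.
split.
  move=> x; case: G => _ hat _ _; have [s hs ->] := hat x.
  exists (pmap insub s); rewrite /eval; congr (J _).
  elim: s hs => //= y s IH /andP[hy hs]; by rewrite insubT /= IH.
move=> u v; split; last exact: cong_eval.
move=> e.
have hu : forall y, y \in v -> le (val y) (eval u).
  move=> y hy; rewrite e; have := le_refl (eval v); rewrite /eval leJ => /allP; apply.
  exact: map_f.
have hv : forall y, y \in u -> le (val y) (eval v).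
  move=> y hy; rewrite -e; have := le_refl (eval u); rewrite /eval leJ => /allP; apply.
  exact: map_f.
apply: cong_trans (step hu) _; apply: cong_sym; apply: cong_trans (step hv) _.
by apply: cong_mem => x; rewrite !mem_cat orbC.
Qed.
End Alg.

Theorem theorem1 (T : finType) (mul : T -> T -> T) (one : T) :
  is_cmi mul one -> geometric mul one -> presented_by_atoms mul one.
Proof. by move=> H G; apply: main. Qed.
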